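(* Let $\Delta$ be a simplicial polytopal fan in $\mathbb{R}^d$ with ray generators $\mathbf{v}_1,\ldots,\mathbf{v}_n$ and let $\mathbf{u}^{(1)},\ldots,\mathbf{u}^{(m)}\in\mathbb{S}^{d-1}$, $U=(\mathbf{u}^{(1)},\ldots,\mathbf{u}^{(m)})^\mathsf{T}$. Then for all $m\ge1$, \[ \lambda_n(A_U^\mathsf{T}A_U)\le mn(c^\Delta)^2. \]
   Context: A fan is simplicial if every cone is generated by linearly independent vectors; polytopal if it is the normal fan of a polytope. For $\mathbf{u}\in\mathbb{R}^d$, with $\sigma$ the cone of $\Delta$ containing $\mathbf{u}$ in its relative interior and $\mathbf{u}=\sum_{k\in I_\sigma}\lambda_k\mathbf{v}_k$ over the generators of $\sigma$, set $[\mathbf{u}]_i=\lambda_i$ for $i\in I_\sigma$ and $0$ otherwise; $A_U$ is the $m\times n$ matrix with rows $[\mathbf{u}^{(i)}]^\mathsf{T}$. $c^\Delta=\max_{\mathbf{u}\in\mathbb{S}^{d-1}}\max_i[\mathbf{u}]_i$. $\lambda_n(A)$ denotes the largest eigenvalue of a symmetric matrix $A$. *)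

(* Defs.v *)
From HB Require Import structures.
From mathcomp Require Import all_boot all_order all_algebra.
From mathcomp Require Import boolp classical_sets reals.
Set Implicit Arguments. Unset Strict Implicit. Unset Printing Implicit Defensive.
Import Order.TTheory GRing.Theory Num.Theory.
Local Open Scope ring_scope.
Local Open Scope classical_set_scope.

Section Defs.
Variables (R : realType) (d n : nat).

Definition dotv (x y : 'rV[R]_d) : R := \sum_(j < d) x 0 j * y 0 j.

Definition on_sphere (u : 'rV[R]_d) : Prop := dotv u u = 1.

Definition gcone (v : 'I_n -> 'rV[R]_d) (S : {set 'I_n}) : set 'rV[R]_d :=
  [set x | exists lam : 'I_n -> R, (forall i, 0 <= lam i) /\
     (forall i, i \notin S -> lam i = 0) /\ x = \sum_i lam i *: v i].

Definition lin_indep (v : 'I_n -> 'rV[R]_d) (S : {set 'I_n}) : Prop :=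
  forall lam : 'I_n -> R, (forall i, i \notin S -> lam i = 0) ->
    \sum_i lam i *: v i = 0 -> forall i, lam i = 0.

(* A simplicial fan with ray generators v_1..v_n, given by the index sets of
   the generators of its cones: every cone is generated by linearly
   independent generators, each cone(v_i) is a ray of the fan, and the rays
   are pairwise distinct. *)
Definition simplicial_fan_rays (v : 'I_n -> 'rV[R]_d) (D : {set {set 'I_n}}) : Prop :=
  [/\ (forall S, S \in D -> lin_indep v S),
      (forall i, (finset.set1 i) \in D) &
      (forall i j, gcone v (finset.set1 i) = gcone v (finset.set1 j) -> i = j)].

Definition polytope k (p : 'I_k -> 'rV[R]_d) : set 'rV[R]_d :=
  [set x | exists w : 'I_k -> R, (forall j, 0 <= w j) /\ \sum_j w j = 1 /\
     x = \sum_j w j *: p j].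

Definition face_of (P : set 'rV[R]_d) (c : 'rV[R]_d) : set 'rV[R]_d :=
  [set x | P x /\ forall y, P y -> dotv c y <= dotv c x].

Definition normal_cone (P F : set 'rV[R]_d) : set 'rV[R]_d :=
  [set c | F `<=` face_of P c].

Definition normal_fan (P : set 'rV[R]_d) : set (set 'rV[R]_d) :=
  [set N | exists c0, N = normal_cone P (face_of P c0)].

Definition polytopal (v : 'I_n -> 'rV[R]_d) (D : {set {set 'I_n}}) : Prop :=
  exists k (p : 'I_k.+1 -> 'rV[R]_d),
    gcone v @` [set S | S \in D] = normal_fan (polytope p).

(* lam are the coordinates of u: u lies in the relative interior of the
   (simplicial) cone sigma_S (all coefficients on generators of S positive),
   u = sum_{k in S} lam_k v_k, and lam_i = 0 for i not in S. *)
Definition is_coords (v : 'I_n -> 'rV[R]_d) (D : {set {set 'I_n}})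
    (u : 'rV[R]_d) (lam : 'rV[R]_n) : Prop :=
  exists2 S, S \in D &
    [/\ (forall i, i \in S -> 0 < lam 0 i),
        (forall i, i \notin S -> lam 0 i = 0) &
        u = \sum_i lam 0 i *: v i].

Definition coords (v : 'I_n -> 'rV[R]_d) (D : {set {set 'I_n}}) (u : 'rV[R]_d)
  : 'rV[R]_n := xget 0 (is_coords v D u).

Definition cDelta (v : 'I_n -> 'rV[R]_d) (D : {set {set 'I_n}}) : R :=
  sup [set x | exists u, on_sphere u /\ exists i, x = coords v D u 0 i].

Definition A_U (v : 'I_n -> 'rV[R]_d) (D : {set {set 'I_n}}) m
    (U : 'I_m -> 'rV[R]_d) : 'M[R]_(m, n) :=
  \matrix_(i, j) coords v D (U i) 0 j.

End Defs.

Definition lambda_max (R : realType) N (A : 'M[R]_N) : R :=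
  sup [set a | eigenvalue A a].

(* Main.v *)
Require Import Defs.
From HB Require Import structures.
From mathcomp Require Import all_boot all_order all_algebra.
From mathcomp Require Import boolp classical_sets reals.
From mathcomp Require Import lra ring.
Import Order.TTheory GRing.Theory Num.Theory.
Local Open Scope ring_scope.

Section Aux.
Variables (R : realType) (d n : nat) (v : 'I_n -> 'rV[R]_d) (D : {set {set 'I_n}}).

Definition WS (S : {set 'I_n}) : 'M[R]_(n, d) :=
  \matrix_(i, k) (if i \in S then v i 0 k else 0).

Lemma sphere_le1 (u : 'rV[R]_d) k : on_sphere u -> `|u 0 k| <= 1.
Proof.
rewrite /on_sphere /dotv => Hu.
have H2 : `|u 0 k| ^+ 2 <= 1.
  rewrite -Hu real_normK ?num_real // (bigD1 k) //= lerDl.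
  by apply: sumr_ge0 => j _; rewrite -expr2 sqr_ge0.
rewrite -(expr1n _ 2%N) in H2.
by rewrite -(ler_pXn2r (_ : (0 < 2)%N)) ?nnegrE.
Qed.

Lemma coords_ge0 u j : 0 <= coords v D u 0 j.
Proof.
rewrite /coords; case: (pselect (exists lam, is_coords v D u lam)) => [ex|nex].
  have [S _ [Hp Hz _]] := xgetPex 0 ex.
  set l := xget _ _ in Hp Hz *.
  by case: (boolP (j \in S)) => jS; [exact/ltW/Hp | rewrite Hz].
rewrite xgetPN ?mxE //.
by move=> x Hx; apply: nex; exists x.
Qed.

Hypothesis Hind : forall S, S \in D -> lin_indep v S.

Definition Cb : R := \sum_(S : {set 'I_n}) \sum_(j < n) \sum_(k < d) `|pinvmx (WS S) k j|.

Lemma is_coords_bound u lam j : on_sphere u -> is_coords v D u lam -> lam 0 j <= Cb.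
Proof.
move=> Hu [S SD [Hp Hz Hs]].
case: (boolP (j \in S)) => jS; last first.
  rewrite Hz // /Cb; apply: sumr_ge0 => S' _; apply: sumr_ge0 => j' _;
  by apply: sumr_ge0 => k _.
set W := WS S.
have Hu' : u = lam *m W.
  apply/rowP => k; rewrite Hs !mxE summxE; apply: eq_bigr => i _.
  rewrite !mxE; case: ifP => iS; first by [].
  by rewrite Hz ?iS // !mul0r.
set y := u *m pinvmx W.
have Hy : y *m W = u by rewrite /y mulmxKpV // Hu' submxMl.
have Hyl : y 0 j = lam 0 j.
  pose mu i := if i \in S then y 0 i - lam 0 i else 0.
  have : mu j = 0.
    have HH := @Hind S SD mu.
    apply: (HH _ _ j); first by move=> i iS; rewrite /mu (negbTE iS).
    apply/rowP => k; rewrite summxE [RHS]mxE.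
    have : ((y - lam) *m W) 0 k = 0 by rewrite mulmxBl Hy Hu' subrr mxE.
    rewrite mxE => H; apply: etrans H; apply: eq_bigr => i _.
    rewrite /mu /y !mxE.
    by case: (i \in S); rewrite ?mulr0 ?mul0r.
  by rewrite /mu jS => /eqP; rewrite subr_eq0 => /eqP.
rewrite -Hyl /y mxE.
apply: (le_trans (ler_norm _)).
apply: (le_trans (ler_norm_sum _ _ _)).
apply: (@le_trans _ _ (\sum_(k < d) `|pinvmx (WS S) k j|)).
  apply: ler_sum => k _; rewrite normrM.
  have H1 := @sphere_le1 u k Hu.
  by rewrite -[X in _ <= X]mul1r ler_wpM2r.
rewrite /Cb (bigD1 S) //= (bigD1 j) //= -addrA lerDl.
by apply: addr_ge0; do ? (apply: sumr_ge0 => ? _).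
Qed.

Lemma coords_le u j : on_sphere u -> coords v D u 0 j <= Cb.
Proof.
move=> Hu; rewrite /coords; case: (pselect (exists lam, is_coords v D u lam)) => [ex|nex].
  exact: is_coords_bound Hu (xgetPex 0 ex).
rewrite xgetPN ?mxE; last by move=> x Hx; apply: nex; exists x.
by rewrite /Cb; do ? (apply: sumr_ge0 => ? _).
Qed.
End Aux.

Lemma norm_prod_le (R : realType) (a b : R) : 2 * (`|a| * `|b|) <= a ^+ 2 + b ^+ 2.
Proof.
have h1 : `|a| ^+ 2 = a ^+ 2 by rewrite real_normK ?num_real.
have h2 : `|b| ^+ 2 = b ^+ 2 by rewrite real_normK ?num_real.
have := sqr_ge0 (`|a| - `|b|); nra.
Qed.

Lemma sum_abs_le (R : realType) n (x : 'rV[R]_n) :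
  \sum_j \sum_k `|x 0 j| * `|x 0 k| <= n%:R * \sum_j x 0 j ^+ 2.
Proof.
have H : 2 * (\sum_j \sum_k `|x 0 j| * `|x 0 k|) <= 2 * (n%:R * \sum_j x 0 j ^+ 2).
  apply: (@le_trans _ _ (\sum_(j < n) \sum_(k < n) (x 0 j ^+ 2 + x 0 k ^+ 2))).
    rewrite mulr_sumr; apply: ler_sum => j _; rewrite mulr_sumr; apply: ler_sum => k _.
    exact: norm_prod_le.
  rewrite (eq_bigr (fun j => x 0 j ^+ 2 * n%:R + \sum_(k < n) x 0 k ^+ 2)); last first.
    by move=> j _; rewrite big_split /= sumr_const card_ord mulr_natr.
  rewrite big_split /= -mulr_suml sumr_const card_ord -mulr_natl; lra.
by rewrite ler_pM2l in H.
Qed.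

Theorem lemma4p7 (R : realType) (d n : nat) (v : 'I_n -> 'rV[R]_d)
  (D : {set {set 'I_n}})
  (Hfan : simplicial_fan_rays v D) (Hpoly : polytopal v D)
  (m : nat) (Hm : (1 <= m)%N) (U : 'I_m -> 'rV[R]_d)
  (HU : forall i, on_sphere (U i)) :
  lambda_max ((A_U v D U)^T *m A_U v D U) <= m%:R * n%:R * (cDelta v D) ^+ 2.
Proof.
case: Hfan => Hind _ _.
set A := A_U v D U; set c := cDelta v D.
have HA0 : forall i j, 0 <= A i j by move=> i j; rewrite mxE; exact: coords_ge0.
have hub : has_ubound [set x | exists u, on_sphere u /\ exists i, x = coords v D u 0 i].
  exists (@Cb R d n v) => x [u [Hu [k ->]]]; exact: (@coords_le _ _ _ v D Hind u k Hu).
have HAc : forall i j, A i j <= c.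
  move=> i j; rewrite mxE /c /cDelta; apply: (ub_le_sup hub).
  by exists (U i); split => //; exists j.
set K := m%:R * c ^+ 2.
have HB : forall k j, 0 <= (A^T *m A) k j <= K.
  move=> k j; rewrite mxE; apply/andP; split.
    by apply: sumr_ge0 => i _; rewrite mxE mulr_ge0.
  apply: (@le_trans _ _ (\sum_(i < m) c ^+ 2)).
    apply: ler_sum => i _; rewrite mxE expr2; apply: ler_pM => //.
  by rewrite sumr_const card_ord -mulr_natl.
have Hev : forall a, eigenvalue (A^T *m A) a -> a <= m%:R * n%:R * c ^+ 2.
  move=> a /eigenvalueP [x Hx xn0].
  have S2pos : 0 < \sum_j x 0 j ^+ 2.
    rewrite lt_def; apply/andP; split; last by apply: sumr_ge0 => j _; exact: sqr_ge0.
    apply: contra xn0 => /eqP H.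
    have H' := psumr_eq0P (fun j _ => sqr_ge0 (x 0 j)) H.
    apply/eqP/rowP => j; rewrite mxE; apply/eqP; rewrite -sqrf_eq0; apply/eqP; exact: H'.
  have key : a * \sum_j x 0 j ^+ 2 = \sum_j \sum_k x 0 j * x 0 k * (A^T *m A) k j.
    rewrite mulr_sumr; apply: eq_bigr => j _.
    have := congr1 (fun M : 'rV_n => M 0 j) Hx; rewrite /= [LHS]mxE [RHS]mxE => Hj.
    rewrite expr2 mulrA [a * _]mulrC -mulrA -Hj mulr_sumr; apply: eq_bigr => k _.
    by rewrite mulrA.
  have le1 : a * \sum_j x 0 j ^+ 2 <= K * \sum_j \sum_k `|x 0 j| * `|x 0 k|.
    rewrite key mulr_sumr; apply: ler_sum => j _; rewrite mulr_sumr; apply: ler_sum => k _.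
    have /andP [b0 bK] := HB k j.
    apply: (le_trans (ler_norm _)); rewrite !normrM (ger0_norm b0) mulrC.
    by apply: ler_wpM2r => //; rewrite mulr_ge0.
  have K0 : 0 <= K by rewrite /K mulr_ge0 // sqr_ge0.
  have le2 := ler_wpM2l K0 (@sum_abs_le R n x).
  have := le_trans le1 le2.
  move=> H; rewrite -(ler_pM2r S2pos); apply: (le_trans H); rewrite /K le_eqVlt; apply/orP; left; apply/eqP.
  ring.
rewrite /lambda_max.
have K0 : 0 <= m%:R * n%:R * c ^+ 2 by rewrite mulr_ge0 // ?sqr_ge0 // mulr_ge0.
case: (pselect ([set a | eigenvalue (A^T *m A) a]%classic = set0)) => [->|ne].
  by rewrite sup0.
apply: ge_sup; last by move=> a /Hev.
by apply/set0P/eqP.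
Qed.
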